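(* Let $p$ be a prime, let $A\in \mathbb{Z}^{m\times n}$ be a matrix all of whose (square) subdeterminants belong to $\{0\}\cup \{\pm p^k:k\in \mathbb{Z}_{\ge 0}\}$, and let $b\in \mathbb{Z}^m$. Then $Ax\leq b$ is totally dual $p$-adic.
   Context: A $p$-adic rational is a number $a/p^k$ with $a,k\in\mathbb{Z}$, $k\ge0$; a vector is $p$-adic if all entries are $p$-adic rationals. A system $Ax\le b$ with integral $A,b$ is totally dual $p$-adic if for every $w\in\mathbb{Z}^n$ for which $\min\{b^\top y: A^\top y=w,\ y\ge \mathbf{0}\}$ has an optimal solution, it has a $p$-adic optimal solution. *)

(* Defs.v *)
From mathcomp Require Import all_boot all_order all_algebra.
Set Implicit Arguments. Unset Strict Implicit. Unset Printing Implicit Defensive.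
Import Order.TTheory GRing.Theory Num.Theory.
Local Open Scope ring_scope.

Definition padic_rat (p : nat) (q : rat) : Prop :=
  exists (a : int) (k : nat), q = a%:~R / (p%:R ^+ k).

Definition padic_vec (p : nat) (m : nat) (y : 'cV[rat]_m) : Prop :=
  forall i, padic_rat p (y i 0).

Definition subdets_padic_powers (p m n : nat) (A : 'M[int]_(m, n)) : Prop :=
  forall (k : nat) (f : 'I_k -> 'I_m) (g : 'I_k -> 'I_n),
    injective f -> injective g ->
    let d := \det (\matrix_(i < k, j < k) A (f i) (g j)) in
    d = 0 \/ exists e : nat, d = (p ^ e)%:Z \/ d = - (p ^ e)%:Z.

Definition dual_feasible (m n : nat) (A : 'M[int]_(m, n)) (w : 'cV[int]_n)
  (y : 'cV[rat]_m) : Prop :=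
  (map_mx intr A)^T *m y = map_mx intr w /\ forall i, 0 <= y i 0.

Definition dual_obj (m : nat) (b : 'cV[int]_m) (y : 'cV[rat]_m) : rat :=
  \sum_(i < m) (b i 0)%:~R * y i 0.

Definition dual_optimal (m n : nat) (A : 'M[int]_(m, n)) (b : 'cV[int]_m)
  (w : 'cV[int]_n) (y : 'cV[rat]_m) : Prop :=
  dual_feasible A w y /\
  forall z, dual_feasible A w z -> dual_obj b y <= dual_obj b z.

Definition totally_dual_padic (p m n : nat) (A : 'M[int]_(m, n))
  (b : 'cV[int]_m) : Prop :=
  forall w : 'cV[int]_n,
    (exists y, dual_optimal A b w y) ->
    exists y, dual_optimal A b w y /\ padic_vec p y.

(* Main.v *)
Require Import Defs.
From mathcomp Require Import all_boot all_order all_algebra.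
From mathcomp Require Import ring lra.
From Stdlib Require Import Classical.
Set Implicit Arguments. Unset Strict Implicit. Unset Printing Implicit Defensive.
Import Order.TTheory GRing.Theory Num.Theory.
Local Open Scope ring_scope.

Lemma obj_lin m (b : 'cV[int]_m) (y z : 'cV[rat]_m) t :
  dual_obj b (y + t *: z) = dual_obj b y + t * dual_obj b z.
Proof.
rewrite /dual_obj mulr_sumr -big_split; apply: eq_bigr => i _; rewrite !mxE.
rewrite mulrDr mulrCA. done.
Qed.

Lemma reduce m n (A : 'M[int]_(m, n)) (b : 'cV[int]_m) (w : 'cV[int]_n)
  (y z : 'cV[rat]_m) :
  dual_optimal A b w y -> z != 0 -> (map_mx intr A)^T *m z = 0 ->
  (forall i, y i 0 = 0 -> z i 0 = 0) ->
  exists y', dual_optimal A b w y' /\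
    (#|[set i | (y' i 0 != 0)%R]| < #|[set i | (y i 0 != 0)%R]|)%N.
Proof.
move=> [[hyA hy0] hopt] hz hAz hsupp.
have [i1 hi1] : exists i, z i 0 != 0.
  case: (pickP (fun i => z i 0 != 0)) => [i Hi|H0]; first by exists i.
  case/negP: hz; apply/eqP/matrixP => i j; rewrite (ord1 j) mxE.
  by move/negbFE/eqP: (H0 i).
case: (@arg_minP _ rat _ i1 (fun i => z i 0 != 0) (fun i => y i 0 / `|z i 0|) hi1)
  => i0 hi0 hmin.
set t0 := y i0 0 / `|z i0 0|.
have Ht0 : forall i, t0 * `|z i 0| <= y i 0.
  move=> i; case: (eqVneq (z i 0) 0) => [->|nz]; first by rewrite normr0 mulr0 hy0.
  have := ler_wpM2r (normr_ge0 (z i 0)) (hmin i nz).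
  by rewrite divfK ?normr_eq0.
have t0ge : 0 <= t0 by rewrite divr_ge0 ?hy0.
have feas : forall s, `|s| <= t0 -> dual_feasible A w (y + s *: z).
  move=> s hs; split.
    by rewrite mulmxDr -scalemxAr hAz scaler0 addr0.
  move=> i; rewrite !mxE.
  have h1 := Ht0 i.
  have h2 : `|s| * `|z i 0| <= t0 * `|z i 0| by rewrite ler_wpM2r.
  have h3 : - (s * z i 0) <= `|s| * `|z i 0| by rewrite -normrM ler_normr lexx orbT.
  lra.
have hobj : dual_obj b z = 0.
  have a1 := hopt _ (feas t0 _); rewrite obj_lin in a1.
  have a2 := hopt _ (feas (- t0) _); rewrite obj_lin in a2.
  have e1 : `|t0| <= t0 by rewrite ger0_norm.
  have e2 : `|- t0| <= t0 by rewrite normrN ger0_norm.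
  move: (a1 e1) (a2 e2) => b1 b2.
  have /eqP : t0 * dual_obj b z = 0 by nra.
  rewrite mulf_eq0 => /orP[/eqP t00|/eqP //].
  have : y i0 0 = 0.
    move: t00; rewrite /t0 => /eqP; rewrite mulf_eq0 invr_eq0 normr_eq0 (negbTE hi0) orbF.
    by move/eqP.
  by move/hsupp => /eqP; rewrite (negbTE hi0).
set s := if 0 < z i0 0 then - t0 else t0.
have hs : `|s| <= t0 by rewrite /s; case: ifP; rewrite ?normrN ger0_norm.
exists (y + s *: z); split.
  split; first exact: feas.
  by move=> z' hz'; rewrite obj_lin hobj mulr0 addr0; apply: hopt.
apply: proper_card; apply/properP; split.
  apply/subsetP => i; rewrite !inE !mxE; apply: contraNneq => hy.
  by rewrite hy (hsupp _ hy) mulr0 addr0.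
exists i0.
  rewrite inE; apply/eqP => h; by move: hi0; rewrite (hsupp _ h) eqxx.
rewrite inE !mxE negbK /s /t0; case: ifP => hz0.
  rewrite gtr0_norm //; apply/eqP; field; by rewrite gt_eqF.
have hzn : z i0 0 < 0 by rewrite lt_neqAle hi0 /= leNgt hz0.
rewrite ltr0_norm //; apply/eqP; field; by rewrite lt_eqF.
Qed.
Lemma vertex_padic p m n (A : 'M[int]_(m, n)) (w : 'cV[int]_n) (y : 'cV[rat]_m) :
  subdets_padic_powers p A -> dual_feasible A w y ->
  (forall z : 'cV[rat]_m, (map_mx intr A)^T *m z = 0 -> (forall i, y i 0 = 0 -> z i 0 = 0) -> z = 0) ->
  padic_vec p y.
Proof.
move=> hsub [hyA hy0] hvert.
set Aq := map_mx (intr : int -> rat) A.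
set S := [set i | y i 0 != 0].
pose f := @enum_val _ (pred_of_set S).
have f_inj : injective f := @enum_val_inj _ _.
have fS : forall l, f l \in S by move=> l; exact: enum_valP.
pose P := rowsub f (1%:M : 'M[rat]_m).
have PE : forall l i, P l i = (f l == i)%:R by move=> l i; rewrite !mxE.
have Poff : forall l i, i \notin S -> P l i = 0.
  move=> l i hi; rewrite PE; case: eqP => // e; by move: hi; rewrite -e fS.
have PPT : P *m P^T = 1%:M.
  rewrite /P mul_rowsub_mx mul1mx; apply/matrixP => i j; rewrite !mxE.
  by rewrite (inj_eq f_inj) eq_sym.
have PTPy : P^T *m (P *m y) = y.
  rewrite {2}/P mul_rowsub_mx mul1mx.
  apply/matrixP => i j; rewrite (ord1 j) mxE.
  under eq_bigr => l _ do rewrite !mxE.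
  case: (boolP (i \in S)) => hi.
    rewrite (bigD1 (enum_rank_in hi i)) //= big1 => [|l hl].
      by rewrite /f enum_rankK_in // eqxx mul1r addr0.
    case: eqP => [e|]; last by rewrite mul0r.
    by case/eqP: hl; apply: f_inj; rewrite /f enum_rankK_in.
  rewrite big1 => [|l _]; last by case: eqP => [e|]; [move: hi; rewrite -e fS | rewrite mul0r].
  by move: hi; rewrite inE negbK => /eqP.
have ASE : rowsub f Aq = P *m Aq by rewrite rowsubE.
have rfAS : row_free (rowsub f Aq).
  rewrite -kermx_eq0; set K := kermx _.
  have hK : K *m P *m Aq = 0 by rewrite -mulmxA -ASE mulmx_ker.
  set Z := (K *m P)^T.
  have hZ : Aq^T *m Z = 0 by rewrite /Z -trmx_mul hK trmx0.
  have Z0 : Z = 0.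
    apply/matrixP => i j.
    have hc : \col_l Z l j = 0.
      apply: hvert.
        apply/matrixP => a c; rewrite (ord1 c).
        transitivity ((Aq^T *m Z) a j); last by rewrite hZ !mxE.
        by rewrite !mxE; apply: eq_bigr => l _; rewrite !mxE.
      move=> i' hi'; rewrite mxE /Z mxE mxE; apply: big1 => l _.
      by rewrite Poff ?mulr0 // inE hi' eqxx.
    by move/matrixP: hc => /(_ i 0); rewrite !mxE.
  have KP0 : K *m P = 0 by apply: trmx_inj; rewrite trmx0.
  have : K = K *m P *m P^T by rewrite -mulmxA PPT mulmx1.
  by rewrite KP0 mul0mx => ->.
have rfT : row_full (rowsub f Aq)^T by rewrite /row_full mxrank_tr.
pose g := fullrankfun rfT.
have g_inj : injective g := @fullrankfun_inj _ _ _ _ rfT.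
pose M := rowsub g (rowsub f Aq)^T.
have Mu : M \in unitmx := fullrowsub_unit rfT.
pose Mint : 'M[int]_#|S| := \matrix_(i, j) A (f j) (g i).
have ME : M = map_mx intr Mint by apply/matrixP => i j; rewrite !mxE.
have hdet := hsub _ f g f_inj g_inj; simpl in hdet.
have detE : \det Mint = \det (\matrix_(i, j) A (f i) (g j)).
  by rewrite -det_tr; congr (\det _); apply/matrixP => i j; rewrite !mxE.
rewrite -detE in hdet.
have hMy : M *m (P *m y) = rowsub g (map_mx intr w).
  by rewrite /M mul_rowsub_mx ASE trmx_mul -mulmxA PTPy hyA.
have hPy : P *m y = invmx M *m rowsub g (map_mx intr w) by rewrite -hMy mulKmx.
have wE : rowsub g (map_mx (intr : int -> rat) w) = map_mx intr (rowsub g w).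
  by apply/matrixP => i j; rewrite !mxE.
move: hPy; rewrite /invmx Mu ME det_map_mx -map_mx_adj wE -scalemxAl -map_mxM => hPy.
move=> i; case: (boolP (i \in S)) => hi; last first.
  exists 0, 0%N; move: hi; rewrite inE negbK => /eqP ->; by rewrite mul0r.
have -> : y i 0 = (P *m y) (enum_rank_in hi i) 0.
  by rewrite /P mul_rowsub_mx mul1mx mxE /f enum_rankK_in.
rewrite hPy !mxE.
set a := \sum_(j < _) _.
case: hdet => [d0|[e [de|de]]].
  by move: Mu; rewrite ME unitmxE det_map_mx d0 unitfE eqxx.
  exists a, e; rewrite de mulrC; congr (_ / _); by rewrite -natrX.
exists (- a)%R, e; rewrite de mulrC rmorphN invrN mulrN -mulNr -rmorphN; congr (_ / _); by rewrite -natrX.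
Qed.

Theorem theorem1p7 (p m n : nat) (A : 'M[int]_(m, n)) (b : 'cV[int]_m) :
  prime p -> subdets_padic_powers p A -> totally_dual_padic p A b.
Proof.
move=> _ hsub w [y0 hy0].
suff H : forall N (y : 'cV[rat]_m), (#|[set i | (y i 0 != 0)%R]| <= N)%N ->
  dual_optimal A b w y -> exists y', dual_optimal A b w y' /\ padic_vec p y'.
  exact: (H _ y0 (leqnn _) hy0).
elim=> [|N IH] y hN hy.
  case: (classic (exists z : 'cV[rat]_m, z != 0 /\ (map_mx intr A)^T *m z = 0 /\
            (forall i, y i 0 = 0 -> z i 0 = 0))) => [[z [hz [hAz hs]]]|Hno].
    have [y' [_ hlt]] := reduce hy hz hAz hs.
    by move: (leq_trans hlt hN).
  exists y; split => //; apply: (vertex_padic hsub (proj1 hy)) => z hAz hs.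
  by case: (eqVneq z 0) => // hz; exfalso; apply: Hno; exists z; split; [|split].
case: (classic (exists z : 'cV[rat]_m, z != 0 /\ (map_mx intr A)^T *m z = 0 /\
          (forall i, y i 0 = 0 -> z i 0 = 0))) => [[z [hz [hAz hs]]]|Hno].
  have [y' [hy' hlt]] := reduce hy hz hAz hs.
  by apply: (IH y') => //; rewrite -ltnS; apply: leq_trans hlt hN.
exists y; split => //; apply: (vertex_padic hsub (proj1 hy)) => z hAz hs.
by case: (eqVneq z 0) => // hz; exfalso; apply: Hno; exists z; split; [|split].
Qed.
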